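(* Let $T:\mathbf{Set}\to\mathbf{Set}$ be a functor and $\Lambda$ a strongly expressive set of monotone singleton-preserving predicate liftings for $T$. Then for all $T$-coalgebras $(X,\xi)$, $(Y,\zeta)$ and states $x\in X$, $y\in Y$: $x$ and $y$ are $\Lambda$-bisimilar if and only if they are behaviourally equivalent.
   Context: An $n$-ary predicate lifting for $T$ is a family $\lambda_X:(\mathcal{P}X)^n\to\mathcal{P}(TX)$ natural w.r.t. preimages ($\lambda_X(f^{-1}[A_1],\dots)=(Tf)^{-1}[\lambda_Y(A_1,\dots)]$); monotone if monotone in every argument; singleton-preserving if $|\lambda_X(\{x_1\},\dots,\{x_n\})|=1$ always. $\Lambda$ is strongly expressive if for every set $X$ and $t\in TX$ there are $\lambda/n\in\Lambda$ and $x_i\in X$ with $\{t\}=\lambda_X(\{x_1\},\dots,\{x_n\})$. A $T$-coalgebra is a pair $(X,\xi)$ with $\xi:X\to TX$; a morphism $h:(X,\xi)\to(Y,\zeta)$ is a map with $Th\circ\xi=\zeta\circ h$. States $x\in X$, $y\in Y$ are behaviourally equivalent if there are a coalgebra $(Z,\theta)$ and morphisms $f:(X,\xi)\to(Z,\theta)$, $g:(Y,\zeta)\to(Z,\theta)$ with $f(x)=g(y)$. For $S\subseteq X\times Y$ and $A\subseteq X$, $S[A]=\{y\mid\exists a\in A.\,a\,S\,y\}$. A $\Lambda$-simulation is a relation $S\subseteq X\times Y$ such that for all $\lambda/n\in\Lambda$, $X_1,\dots,X_n\subseteq X$ and $x\,S\,y$: $\xi(x)\in\lambda_X(X_1,\dots,X_n)$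 implies $\zeta(y)\in\lambda_Y(S[X_1],\dots,S[X_n])$. A $\Lambda$-bisimulation is a $\Lambda$-simulation $S$ whose converse is also a $\Lambda$-simulation; $x,y$ are $\Lambda$-bisimilar if some $\Lambda$-bisimulation relates them. *)

(* Defs.v *)
(* Sets are modelled by Rocq types, subsets by predicates X -> Prop. *)
From Stdlib Require Import Fin.

Definition is_functor (T : Type -> Type)
  (fmap : forall X Y : Type, (X -> Y) -> T X -> T Y) : Prop :=
  (forall (X : Type) (t : T X), fmap X X (fun x => x) t = t) /\
  (forall (X Y Z : Type) (f : X -> Y) (g : Y -> Z) (t : T X),
      fmap X Z (fun x => g (f x)) t = fmap Y Z g (fmap X Y f t)).

(* An n-ary predicate lifting candidate: lambda_X : (P X)^n -> P (T X). *)
Definition pred_lifting (T : Type -> Type) (n : nat) : Type :=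
  forall X : Type, (Fin.t n -> X -> Prop) -> T X -> Prop.

Definition natural_lifting (T : Type -> Type)
  (fmap : forall X Y : Type, (X -> Y) -> T X -> T Y)
  (n : nat) (lam : pred_lifting T n) : Prop :=
  forall (X Y : Type) (f : X -> Y) (A : Fin.t n -> Y -> Prop) (t : T X),
    lam X (fun i x => A i (f x)) t <-> lam Y A (fmap X Y f t).

Definition monotone_lifting (T : Type -> Type) (n : nat)
  (lam : pred_lifting T n) : Prop :=
  forall (X : Type) (A B : Fin.t n -> X -> Prop),
    (forall i x, A i x -> B i x) ->
    forall t, lam X A t -> lam X B t.

Definition singleton_preserving (T : Type -> Type) (n : nat)
  (lam : pred_lifting T n) : Prop :=
  forall (X : Type) (xs : Fin.t n -> X),
    exists t : T X, forall t' : T X, lam X (fun i x => x = xs i) t' <-> t' = t.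

(* A set Lambda of predicate liftings, presented as a family indexed by L
   with arities ar. *)
Definition strongly_expressive (T : Type -> Type) (L : Type) (ar : L -> nat)
  (lam : forall l : L, pred_lifting T (ar l)) : Prop :=
  forall (X : Type) (t : T X),
    exists (l : L) (xs : Fin.t (ar l) -> X),
      forall t' : T X, lam l X (fun i x => x = xs i) t' <-> t' = t.

Definition coalg_morphism (T : Type -> Type)
  (fmap : forall X Y : Type, (X -> Y) -> T X -> T Y)
  (X : Type) (xi : X -> T X) (Y : Type) (zeta : Y -> T Y) (h : X -> Y) : Prop :=
  forall x : X, fmap X Y h (xi x) = zeta (h x).

Definition behav_equiv (T : Type -> Type)
  (fmap : forall X Y : Type, (X -> Y) -> T X -> T Y)
  (X : Type) (xi : X -> T X) (Y : Type) (zeta : Y -> T Y) (x : X) (y : Y) : Prop :=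
  exists (Z : Type) (theta : Z -> T Z) (f : X -> Z) (g : Y -> Z),
    coalg_morphism T fmap X xi Z theta f /\
    coalg_morphism T fmap Y zeta Z theta g /\ f x = g y.

Definition rel_image {X Y : Type} (S : X -> Y -> Prop) (A : X -> Prop) : Y -> Prop :=
  fun y => exists a, A a /\ S a y.

Definition lambda_simulation (T : Type -> Type) (L : Type) (ar : L -> nat)
  (lam : forall l : L, pred_lifting T (ar l))
  (X : Type) (xi : X -> T X) (Y : Type) (zeta : Y -> T Y)
  (S : X -> Y -> Prop) : Prop :=
  forall (l : L) (As : Fin.t (ar l) -> X -> Prop) (x : X) (y : Y),
    S x y -> lam l X As (xi x) ->
    lam l Y (fun i => rel_image S (As i)) (zeta y).

Definition lambda_bisimulation (T : Type -> Type) (L : Type) (ar : L -> nat)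
  (lam : forall l : L, pred_lifting T (ar l))
  (X : Type) (xi : X -> T X) (Y : Type) (zeta : Y -> T Y)
  (S : X -> Y -> Prop) : Prop :=
  lambda_simulation T L ar lam X xi Y zeta S /\
  lambda_simulation T L ar lam Y zeta X xi (fun b a => S a b).

Definition lambda_bisimilar (T : Type -> Type) (L : Type) (ar : L -> nat)
  (lam : forall l : L, pred_lifting T (ar l))
  (X : Type) (xi : X -> T X) (Y : Type) (zeta : Y -> T Y) (x : X) (y : Y) : Prop :=
  exists S : X -> Y -> Prop,
    lambda_bisimulation T L ar lam X xi Y zeta S /\ S x y.

(* Main.v *)
Require Import Defs.
From Stdlib Require Import Fin.
From Stdlib Require Import ClassicalEpsilon FunctionalExtensionality PropExtensionality.

Section Aux.
Variables (T : Type -> Type) (fmap : forall X Y : Type, (X -> Y) -> T X -> T Y)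
  (L : Type) (ar : L -> nat) (lam : forall l : L, pred_lifting T (ar l))
  (Hnat : forall l : L, natural_lifting T fmap (ar l) (lam l))
  (Hmono : forall l : L, monotone_lifting T (ar l) (lam l))
  (Hsing : forall l : L, singleton_preserving T (ar l) (lam l))
  (Hexp : strongly_expressive T L ar lam).

Lemma sim_of_morph (X : Type) (xi : X -> T X) (Y : Type) (zeta : Y -> T Y)
  (Z : Type) (theta : Z -> T Z) (f : X -> Z) (g : Y -> Z)
  (Hf : coalg_morphism T fmap X xi Z theta f)
  (Hg : coalg_morphism T fmap Y zeta Z theta g)
  (R : X -> Y -> Prop) (HR : forall a b, R a b <-> f a = g b) :
  lambda_simulation T L ar lam X xi Y zeta R.
Proof.
  intros l As a b Hab H.
  set (A := fun i z => exists a0, As i a0 /\ f a0 = z).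
  assert (H1 : lam l X (fun i a' => A i (f a')) (xi a)).
  { apply (Hmono l X As); [|exact H]. intros i a' Ha'. exists a'. auto. }
  apply (Hnat l X Z f A) in H1. rewrite Hf in H1.
  apply HR in Hab. rewrite Hab, <- Hg in H1.
  apply (Hnat l Y Z g A) in H1.
  eapply (Hmono l Y); [|exact H1].
  intros i b' [a0 [H2 H3]]. exists a0. split; [exact H2|]. apply HR; exact H3.
Qed.

Lemma key (X : Type) (xi : X -> T X) (Y : Type) (zeta : Y -> T Y)
  (S : X -> Y -> Prop) (HS : lambda_simulation T L ar lam X xi Y zeta S)
  (Z : Type) (p : X -> Z) (r : Y -> Z) (Hpr : forall a b, S a b -> p a = r b)
  (x : X) (y : Y) : S x y -> fmap X Z p (xi x) = fmap Y Z r (zeta y).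
Proof.
  intros Hxy.
  destruct (Hexp X (xi x)) as [l [xs Hxs]].
  assert (H0 : lam l X (fun i a => a = xs i) (xi x)) by (apply Hxs; reflexivity).
  pose proof (HS l _ x y Hxy H0) as H1.
  destruct (Hsing l Z (fun i => p (xs i))) as [u Hu].
  assert (E1 : fmap X Z p (xi x) = u).
  { apply Hu. apply (Hnat l X Z p (fun i z => z = p (xs i))).
    eapply (Hmono l X); [|exact H0]. intros i a ->. reflexivity. }
  assert (E2 : fmap Y Z r (zeta y) = u).
  { apply Hu. apply (Hnat l Y Z r (fun i z => z = p (xs i))).
    eapply (Hmono l Y); [|exact H1]. intros i b [a0 [-> H2]].
    symmetry. apply Hpr. exact H2. }
  congruence.
Qed.

Inductive eqcl {W : Type} (R : W -> W -> Prop) : W -> W -> Prop :=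
| ec_base : forall a b, R a b -> eqcl R a b
| ec_refl : forall a, eqcl R a a
| ec_sym : forall a b, eqcl R a b -> eqcl R b a
| ec_trans : forall a b c, eqcl R a b -> eqcl R b c -> eqcl R a c.

End Aux.

Theorem mainTheorem6
  (T : Type -> Type) (fmap : forall X Y : Type, (X -> Y) -> T X -> T Y)
  (HT : is_functor T fmap)
  (L : Type) (ar : L -> nat) (lam : forall l : L, pred_lifting T (ar l))
  (Hnat : forall l : L, natural_lifting T fmap (ar l) (lam l))
  (Hmono : forall l : L, monotone_lifting T (ar l) (lam l))
  (Hsing : forall l : L, singleton_preserving T (ar l) (lam l))
  (Hexp : strongly_expressive T L ar lam) :
  forall (X : Type) (xi : X -> T X) (Y : Type) (zeta : Y -> T Y) (x : X) (y : Y),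
    lambda_bisimilar T L ar lam X xi Y zeta x y <->
    behav_equiv T fmap X xi Y zeta x y.
Proof.
  intros X xi Y zeta x y. split.
  - intros [S [[HS _] Hxy]].
    set (R := fun w w' : X + Y => match w, w' with
                                  | inl a, inr b => S a b
                                  | _, _ => False end).
    set (E := eqcl R).
    set (q := fun w : X + Y => fun w' => E w w').
    assert (Hq : forall w w', q w = q w' -> E w w').
    { intros w w' Heq. apply ec_sym.
      change (q w' w). rewrite <- Heq. apply ec_refl. }
    assert (Hq2 : forall w w', E w w' -> q w = q w').
    { intros w w' H. apply functional_extensionality. intros v.
      apply propositional_extensionality. unfold q. split; intro H'.
      - apply ec_trans with w; [apply ec_sym|]; assumption.
      - apply ec_trans with w'; assumption. }
    set (h := fun w : X + Y => match w with
              | inl a => fmap X _ (fun a => q (inl a)) (xi a)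
              | inr b => fmap Y _ (fun b => q (inr b)) (zeta b) end).
    assert (Hh : forall w w', E w w' -> h w = h w').
    { intros w w' H. induction H.
      - destruct a as [a|a]; destruct b as [b|b]; try contradiction.
        simpl. apply (key T fmap L ar lam Hnat Hmono Hsing Hexp X xi Y zeta S HS).
        + intros a' b' H'. apply Hq2. apply ec_base. exact H'.
        + exact H.
      - reflexivity.
      - congruence.
      - congruence. }
    set (theta := fun c : X + Y -> Prop =>
                    h (epsilon (inhabits (inl x)) (fun w => c = q w))).
    assert (Hth : forall w, theta (q w) = h w).
    { intros w. unfold theta.
      pose proof (epsilon_spec (inhabits (inl x)) (fun w0 => q w = q w0)
                    (ex_intro _ w eq_refl)) as He.
      simpl in He. apply Hh. apply ec_sym. apply Hq. rewrite <- He. reflexivity. }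
    exists (X + Y -> Prop), theta, (fun a => q (inl a)), (fun b => q (inr b)).
    split; [|split].
    + intros a. rewrite Hth. reflexivity.
    + intros b. rewrite Hth. reflexivity.
    + apply Hq2. apply ec_base. exact Hxy.
  - intros [Z [theta [f [g [Hf [Hg Hxy]]]]]].
    exists (fun a b => f a = g b). split; [split|exact Hxy].
    + eapply sim_of_morph; eauto. tauto.
    + eapply sim_of_morph; eauto. intros; split; intro; symmetry; assumption.
Qed.
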